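(* Consider any of the three variants (F, O, T) of the two-round protocol described in the context, with parameters $\epsilon_1,\epsilon_2\ge 0$, $d_{max}\in\mathbb Z_{\ge0}$, $\mu\in[0,\frac{e^{\epsilon_1}}{e^{\epsilon_1}+1}]$, where all neighbor lists considered have at most $d_{max}$ ones. For $i\in[n]$ let $\mathcal R_i^1$ be the first-round randomizer of $v_i$ (mapping $\mathbf a_i$ to $\mathbf r_i$) and $\mathcal R_i^2(M_i)$ the second-round randomizer (mapping $\mathbf a_i$ to $\hat w_i$, given the message $M_i$), and let $\mathcal R_i(\mathbf a_i)=(\mathcal R_i^1(\mathbf a_i),\mathcal R_i^2(M_i)(\mathbf a_i))$. Then each $\mathcal R_i$ satisfies $(\epsilon_1+\epsilon_2)$-edge LDP, and $(\mathcal R_1,\dots,\mathcal R_n)$ satisfies $(\epsilon_1+\epsilon_2)$-relationship DP.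
   Context: Let $G$ be a simple undirected graph on $V=\{v_1,\dots,v_n\}$ with symmetric adjacency matrix $\mathbf A=(a_{i,j})\in\{0,1\}^{n\times n}$, $a_{i,i}=0$; $\mathbf a_i$ is the $i$-th row (neighbor list of $v_i$). $ARR_{\epsilon,\mu}:\{0,1\}\to\{0,1\}$ is the randomized map with $\Pr[ARR_{\epsilon,\mu}(1)=1]=\mu$ and $\Pr[ARR_{\epsilon,\mu}(0)=1]=\mu e^{-\epsilon}$. Protocol: let $\rho=e^{-\epsilon_1}$ and $\mu^*=\mu,\mu^2,\mu^3$ in variants F, O, T respectively. Round 1: each $v_i$ computes $r_{i,j}=ARR_{\epsilon_1,\mu}(a_{i,j})$ for all $j<i$ (all independent) and sends $\mathbf r_i=(r_{i,1},\dots,r_{i,i-1})$. The server forms the set of unordered pairs $E'=\{\{v_j,v_k\}: j<k,\ r_{k,j}=1\}$. Round 2: the server sends $v_i$ the message $M_i=\{\{v_j,v_k\}\in E': j<k<i\}$ (F), $M_i=\{\{v_j,v_k\}\in E':\{v_i,v_k\}\in E',\ j<k<i\}$ (O), or $M_i=\{\{v_j,v_k\}\in E':\{v_i,v_j\}\in E',\{v_i,v_k\}\in E',\ j<k<i\}$ (T). User $v_i$ computes $t_i=|\{(j,k):j<k<i,\ a_{i,j}=a_{i,k}=1,\ \{v_j,v_k\}\in M_i\}|$, $s_i=|\{(j,k):j<k<i,\ a_{i,j}=a_{i,k}=1\}|$, $w_i=t_i-\mu^*\rho s_i$, and sends $\hat w_i=w_i+\mathrm{Lap}(d_{max}/\epsilon_2)$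 (Laplace noise with mean 0 and scale $d_{max}/\epsilon_2$, independent). The server outputs $\hat f_\triangle(G)=\frac{1}{\mu^*(1-\rho)}\sum_{i=1}^n\hat w_i$. Definitions: a local randomizer $\mathcal R$ on $\{0,1\}^n$ satisfies $\epsilon$-edge LDP if $\Pr[\mathcal R(\mathbf a)=s]\le e^\epsilon\Pr[\mathcal R(\mathbf a')=s]$ for all $\mathbf a,\mathbf a'$ differing in one bit and all outputs $s$. A tuple $(\mathcal R_1,\dots,\mathcal R_n)$ (independent randomness) satisfies $\epsilon$-relationship DP if for all graphs $G,G'$ on $V$ differing in exactly one edge, with adjacency rows $\mathbf a_i,\mathbf a_i'$, and all output tuples $(s_1,\dots,s_n)$, $\Pr[(\mathcal R_1(\mathbf a_1),\dots,\mathcal R_n(\mathbf a_n))=(s_1,\dots,s_n)]\le e^\epsilon\Pr[(\mathcal R_1(\mathbf a_1'),\dots,\mathcal R_n(\mathbf a_n'))=(s_1,\dots,s_n)]$. *)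

(* Defs.v *)
From HB Require Import structures.
From mathcomp Require Import all_boot all_order all_algebra.
From mathcomp Require Import reals.
From mathcomp Require Import sequences exp.
Set Implicit Arguments. Unset Strict Implicit. Unset Printing Implicit Defensive.
Import Order.TTheory GRing.Theory Num.Theory.
Local Open Scope ring_scope.

Inductive variant := VarF | VarO | VarT.

Section Defs.
Variable R : realType.

Definition mustar (v : variant) (mu : R) : R :=
  match v with VarF => mu | VarO => mu ^+ 2 | VarT => mu ^+ 3 end.

Definition arr_prob (eps mu : R) (a b : bool) : R :=
  if a then (if b then mu else 1 - mu)
  else (if b then mu * expR (- eps) else 1 - mu * expR (- eps)).

(* First-round randomizer R_i^1 of user v_i: pmf of r_i = (r_{i,j})_{j<i}.
   Outputs are encoded as r : 'I_n -> bool, coordinates j >= i being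
   fixed to false (they are not part of r_i). *)
Definition round1_pmf n (eps1 mu : R) (i : 'I_n) (a r : 'I_n -> bool) : R :=
  \prod_(j < n) (if (j < i)%N then arr_prob eps1 mu (a j) (r j)
                 else (if r j then 0 else 1)).

(* Round-1 transcript Rt : Rt k = r_k.  {v_j,v_k} in E' iff r_{max,min} = 1. *)
Definition in_E' n (Rt : 'I_n -> 'I_n -> bool) (j k : 'I_n) : bool :=
  if (j < k)%N then Rt k j else if (k < j)%N then Rt j k else false.

Definition message n (v : variant) (Rt : 'I_n -> 'I_n -> bool) (i j k : 'I_n)
  : bool :=
  [&& (j < k)%N, (k < i)%N, in_E' Rt j k &
     match v with
     | VarF => true
     | VarO => in_E' Rt i k
     | VarT => in_E' Rt i j && in_E' Rt i k
     end].

Definition t_count n (i : 'I_n) (a : 'I_n -> bool) (M : 'I_n -> 'I_n -> bool)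
  : nat :=
  #|[set jk : 'I_n * 'I_n |
      [&& (jk.1 < jk.2)%N, (jk.2 < i)%N, a jk.1, a jk.2 & M jk.1 jk.2]]|.

Definition s_count n (i : 'I_n) (a : 'I_n -> bool) : nat :=
  #|[set jk : 'I_n * 'I_n |
      [&& (jk.1 < jk.2)%N, (jk.2 < i)%N, a jk.1 & a jk.2]]|.

Definition w_val (v : variant) (eps1 mu : R) n (i : 'I_n) (a : 'I_n -> bool)
  (M : 'I_n -> 'I_n -> bool) : R :=
  (t_count i a M)%:R - mustar v mu * expR (- eps1) * (s_count i a)%:R.

Definition lap_pdf (b x : R) : R := expR (- `|x| / b) / (2 * b).

Definition upd_row n (Rt : 'I_n -> 'I_n -> bool) (i : 'I_n) (r : 'I_n -> bool)
  : 'I_n -> 'I_n -> bool := fun k => if k == i then r else Rt k.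

(* Output distribution (pmf in r_i times density in hat w_i) of
   R_i(a_i) = (R_i^1(a_i), R_i^2(M_i)(a_i)), when the other users'
   first-round reports are Rother (M_i may depend on r_i itself in O, T). *)
Definition local_density (v : variant) (eps1 eps2 mu : R) (dmax : nat) n
  (i : 'I_n) (Rother : 'I_n -> 'I_n -> bool)
  (a : 'I_n -> bool) (s : ('I_n -> bool) * R) : R :=
  round1_pmf eps1 mu i a s.1 *
  lap_pdf (dmax%:R / eps2)
    (s.2 - w_val v eps1 mu i a (message v (upd_row Rother i s.1) i)).

Definition joint_density (v : variant) (eps1 eps2 mu : R) (dmax : nat) n
  (A : 'I_n -> 'I_n -> bool)
  (s : ('I_n -> 'I_n -> bool) * ('I_n -> R)) : R :=
  (\prod_(i < n) round1_pmf eps1 mu i (A i) (s.1 i)) *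
  \prod_(i < n) lap_pdf (dmax%:R / eps2)
                  (s.2 i - w_val v eps1 mu i (A i) (message v s.1 i)).

Definition deg_le n (dmax : nat) (a : 'I_n -> bool) : Prop :=
  (#|[pred j | a j]| <= dmax)%N.

Definition differ_one_bit n (a a' : 'I_n -> bool) : Prop :=
  exists j, a j != a' j /\ forall k, k != j -> a k = a' k.

Definition edge_LDP n (D : ('I_n -> bool) -> Prop) (O : Type) (eps : R)
  (dens : ('I_n -> bool) -> O -> R) : Prop :=
  forall a a', D a -> D a' -> differ_one_bit a a' ->
  forall s : O, dens a s <= expR eps * dens a' s.

Definition simple_graph n (A : 'I_n -> 'I_n -> bool) : Prop :=
  (forall u w, A u w = A w u) /\ (forall u, A u u = false).

Definition differ_one_edge n (A A' : 'I_n -> 'I_n -> bool) : Prop :=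
  exists u w, u != w /\ A u w != A' u w /\
    forall x y, A x y != A' x y -> (x == u) && (y == w) || (x == w) && (y == u).

Definition relationship_DP n (D : ('I_n -> 'I_n -> bool) -> Prop) (O : Type)
  (eps : R) (dens : ('I_n -> 'I_n -> bool) -> O -> R) : Prop :=
  forall A A', D A -> D A' -> differ_one_edge A A' ->
  forall s : O, dens A s <= expR eps * dens A' s.

End Defs.

(* Main.v *)
Require Import Defs.
From HB Require Import structures.
From mathcomp Require Import all_boot all_order all_algebra.
From mathcomp Require Import reals.
From mathcomp Require Import sequences exp.
From mathcomp Require Import ring lra.
Import Order.TTheory GRing.Theory Num.Theory.
Local Open Scope ring_scope.

Section Aux.
Variable R : realType.

Lemma prod_le1 (I : finType) (f f' : I -> R) (i0 : I) (c : R) :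
  (forall i, 0 <= f i) -> (forall i, i != i0 -> f i = f' i) ->
  f i0 <= c * f' i0 -> \prod_i f i <= c * \prod_i f' i.
Proof.
move=> f0 feq fi0.
rewrite (bigD1 i0) //= [X in _ <= _ * X](bigD1 i0) //=.
rewrite [X in _ <= _ * (_ * X)](eq_bigr (fun i => f i)); last by move=> i /feq.
rewrite mulrA ler_wpM2r //.
by apply: prodr_ge0 => i _.
Qed.

Lemma arr_ge0 (eps mu : R) x b : 0 <= eps -> 0 <= mu -> mu <= 1 ->
  0 <= arr_prob eps mu x b.
Proof.
move=> e0 m0 m1.
have r0 : 0 <= expR (- eps) := expR_ge0 _.
have r1 : expR (- eps) <= 1 by rewrite expR_le1 oppr_le0.
have h : mu * expR (- eps) <= 1 by rewrite mulr_ile1.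
rewrite /arr_prob; case: x; case: b; rewrite ?subr_ge0 //.
exact: mulr_ge0.
Qed.

Lemma arr_bound (eps mu : R) x y b : 0 <= eps -> 0 <= mu ->
  mu <= expR eps / (expR eps + 1) ->
  arr_prob eps mu x b <= expR eps * arr_prob eps mu y b.
Proof.
move=> e0 m0 mle.
set E := expR eps.
have E1 : 1 <= E by rewrite -expR0 ler_expR.
have rho : expR (- eps) * E = 1 by rewrite mulrC expRxMexpNx_1.
set r := expR (- eps) in rho *.
have r0 : 0 < r := expR_gt0 _.
have E0 : 0 < E + 1 by lra.
have mE : mu * (E + 1) <= E by rewrite -ler_pdivlMr.
have m1 : mu <= 1.
  apply: le_trans mle _; rewrite ler_pdivrMr //; lra.
have r1 : r <= 1 by rewrite expR_le1 oppr_le0.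
have h1 : mu * r <= mu by rewrite ler_piMr // ltW.
have h2 : 0 <= mu * r by rewrite mulr_ge0 // ltW.
rewrite /arr_prob; case: x; case: y; case: b.
- rewrite -[X in X <= _]mul1r; exact: ler_wpM2r.
- have : 0 <= 1 - mu by lra.
  move=> h; rewrite -[X in X <= _]mul1r; exact: ler_wpM2r.
- by rewrite mulrCA (mulrC E) rho mulr1.
- have h3 : 0 <= 1 - mu * r by lra.
  apply: le_trans (_ : 1 - mu * r <= _); first lra.
  rewrite -[X in X <= _]mul1r; exact: ler_wpM2r.
- apply: le_trans h1 _; rewrite -[X in X <= _]mul1r; exact: ler_wpM2r.
- have : 0 <= E * (E * (1 - mu) - (1 - mu * r)).
    have -> : E * (E * (1 - mu) - (1 - mu * r)) = (E - 1) * (E - mu * (E + 1)).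
      have key : E * (mu * r) = mu by rewrite mulrCA (mulrC E) rho mulr1.
      have -> : E * (E * (1 - mu) - (1 - mu * r)) =
        (E - 1) * (E - mu * (E + 1)) + (E * (mu * r) - mu) by ring.
      by rewrite key subrr addr0.
    apply: mulr_ge0; lra.
  by rewrite pmulr_rge0 ?subr_ge0 //; lra.
- rewrite -[X in X <= _]mul1r; exact: ler_wpM2r.
- have h3 : 0 <= 1 - mu * r by lra.
  rewrite -[X in X <= _]mul1r; exact: ler_wpM2r.
Qed.

Lemma mu_le1 (eps mu : R) : 0 <= eps -> mu <= expR eps / (expR eps + 1) -> mu <= 1.
Proof.
move=> e0 mle.
have E1 : 1 <= expR eps by rewrite -expR0 ler_expR.
apply: le_trans mle _; rewrite ler_pdivrMr; lra.
Qed.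

Lemma round1_bound n (eps mu : R) (i : 'I_n) a a' r :
  0 <= eps -> 0 <= mu -> mu <= expR eps / (expR eps + 1) ->
  differ_one_bit a a' ->
  round1_pmf eps mu i a r <= expR eps * round1_pmf eps mu i a' r.
Proof.
move=> e0 m0 mle [j0 [_ hk]].
have m1 : mu <= 1 by exact: mu_le1 e0 mle.
have E1 : 1 <= expR eps by rewrite -expR0 ler_expR.
apply: (@prod_le1 _ _ _ j0).
- move=> j; case: ifP => _; first exact: arr_ge0.
  by case: (r j).
- by move=> j /hk ->.
- case: ifP => _; first exact: arr_bound.
  rewrite -[X in X <= _]mul1r; apply: ler_wpM2r => //.
  by case: (r j0).
Qed.

Lemma row_same n (eps mu : R) (v : variant) (i : 'I_n) a a' r M :
  (forall j : 'I_n, (j < i)%N -> a j = a' j) ->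
  (round1_pmf eps mu i a r = round1_pmf eps mu i a' r) /\ (w_val v eps mu i a M = w_val v eps mu i a' M).
Proof.
move=> H; split.
  by apply: eq_bigr => j _; case: ifP => // h; rewrite H.
rewrite /w_val /t_count /s_count.
congr (_%:R - _ * _%:R); apply: eq_card => -[x y]; rewrite !inE /=;
  case h1: (x < y)%N => //=; case h2: (y < i)%N => //=;
  by rewrite !H // (ltn_trans h1 h2).
Qed.

Lemma card_diff n (i j0 : 'I_n) (a a' : 'I_n -> bool) (M : 'I_n -> 'I_n -> bool) (dmax : nat) :
  a j0 = true -> (forall k, k != j0 -> a k = a' k) -> deg_le dmax a ->
  let S b := [set jk : 'I_n * 'I_n | [&& (jk.1 < jk.2)%N, (jk.2 < i)%N, b jk.1 & b jk.2]] in
  let T b := [set jk : 'I_n * 'I_n |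
      [&& (jk.1 < jk.2)%N, (jk.2 < i)%N, b jk.1, b jk.2 & M jk.1 jk.2]] in
  [/\ S a' \subset S a, T a' \subset T a, T a :\: T a' \subset S a :\: S a'
    & (#|S a :\: S a'| <= dmax)%N].
Proof.
move=> aj0 hk dg S T.
have imp : forall k, a' k -> a k.
  by move=> k; case: (eqVneq k j0) => [->|/hk ->].
split.
- apply/subsetP => -[x y]; rewrite !inE /= => /and4P[-> -> /imp -> /imp ->] //.
- apply/subsetP => -[x y]; rewrite !inE /= => /and5P[-> -> /imp -> /imp -> ->] //.
- apply/subsetP => -[x y]; rewrite !inE /=.
  case/andP => nT /and5P[h1 h2 -> -> hM] /=.
  rewrite h1 h2; move: nT; rewrite hM h1 h2 /=; by rewrite !andbT.
- apply: leq_trans dg.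
  pose f (k : 'I_n) := if (j0 < k)%N then (j0, k) else (k, j0).
  apply: leq_trans (leq_imset_card f [pred j | a j]).
  apply: subset_leq_card; apply/subsetP => -[x y]; rewrite !inE /=.
  case/andP => nS /and4P[hxy hyi ax ay].
  case: (eqVneq x j0) => [ex|nx].
    apply/imsetP; exists y => //; rewrite /f -ex hxy //.
  case: (eqVneq y j0) => [ey|ny].
    apply/imsetP; exists x => //; rewrite /f -ey ltnNge (ltnW hxy) //.
  by move: nS; rewrite hxy hyi -!hk // ax ay.
Qed.

Lemma real_fact (p q x y d : nat) (c : R) : 0 <= c -> c <= 1 -> (x <= y)%N -> (y <= d)%N ->
  `|((p + x)%:R - c * (q + y)%:R) - (p%:R - c * q%:R)| <= d%:R.
Proof.
move=> c0 c1 hxy hyd.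
have hx : (x%:R : R) <= y%:R by rewrite ler_nat.
have hy : (y%:R : R) <= d%:R by rewrite ler_nat.
have hx0 : (0 : R) <= x%:R by rewrite ler0n.
have hcy : c * y%:R <= y%:R by rewrite ler_piMl // ler0n.
have hcy0 : 0 <= c * y%:R by rewrite mulr_ge0 // ler0n.
rewrite !natrD ler_norml; apply/andP; split; lra.
Qed.

Lemma c_bounds (v : variant) (eps mu : R) : 0 <= eps -> 0 <= mu -> mu <= 1 ->
  0 <= mustar v mu * expR (- eps) /\ mustar v mu * expR (- eps) <= 1.
Proof.
move=> e0 m0 m1.
have r0 : 0 <= expR (- eps) := expR_ge0 _.
have r1 : expR (- eps) <= 1 by rewrite expR_le1 oppr_le0.
have [ms0 ms1] : 0 <= mustar v mu /\ mustar v mu <= 1.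
  by case: v => /=; split; rewrite ?exprn_ge0 ?exprn_ile1.
by split; [apply: mulr_ge0 | apply: mulr_ile1].
Qed.

Lemma w_bound_or n v (eps mu : R) (i j0 : 'I_n) a a' M dmax :
  0 <= eps -> 0 <= mu -> mu <= 1 -> a j0 = true ->
  (forall k, k != j0 -> a k = a' k) -> deg_le dmax a ->
  `|w_val v eps mu i a M - w_val v eps mu i a' M| <= dmax%:R.
Proof.
move=> e0 m0 m1 aj0 hk dg.
have [c0 c1] := @c_bounds v eps mu e0 m0 m1.
have := @card_diff n i j0 a a' M dmax aj0 hk dg; move=> /= [sS sT sTS hd].
rewrite /w_val /t_count /s_count.
set Ta := [set jk : 'I_n * 'I_n | [&& (jk.1 < jk.2)%N, (jk.2 < i)%N, a jk.1, a jk.2 & M jk.1 jk.2]] in sT sTS *.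
set Ta' := [set jk : 'I_n * 'I_n | [&& (jk.1 < jk.2)%N, (jk.2 < i)%N, a' jk.1, a' jk.2 & M jk.1 jk.2]] in sT sTS *.
set Sa := [set jk : 'I_n * 'I_n | [&& (jk.1 < jk.2)%N, (jk.2 < i)%N, a jk.1 & a jk.2]] in sS sTS hd *.
set Sa' := [set jk : 'I_n * 'I_n | [&& (jk.1 < jk.2)%N, (jk.2 < i)%N, a' jk.1 & a' jk.2]] in sS sTS hd *.
rewrite -(cardsID Ta' Ta) -(cardsID Sa' Sa) (setIidPr sT) (setIidPr sS).
apply: real_fact => //.
exact: subset_leq_card.
Qed.

Lemma w_bound n v (eps mu : R) (i : 'I_n) a a' M dmax :
  0 <= eps -> 0 <= mu -> mu <= 1 -> differ_one_bit a a' ->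
  deg_le dmax a -> deg_le dmax a' ->
  `|w_val v eps mu i a M - w_val v eps mu i a' M| <= dmax%:R.
Proof.
move=> e0 m0 m1 [j0 [ne hk]] da da'.
case aj: (a j0); first exact: (@w_bound_or n v eps mu i j0).
have a'j : a' j0 = true by move: ne; rewrite aj; case: (a' j0).
rewrite distrC; apply: (@w_bound_or n v eps mu i j0) => //.
by move=> k /hk ->.
Qed.

Lemma lap_ge0 (b x : R) : 0 <= b -> 0 <= lap_pdf b x.
Proof.
move=> b0; rewrite /lap_pdf; apply: divr_ge0; first exact: expR_ge0.
by rewrite mulr_ge0.
Qed.

Lemma lap_bound (eps2 : R) (dmax : nat) x x' : 0 <= eps2 -> `|x - x'| <= dmax%:R ->
  lap_pdf (dmax%:R / eps2) x <= expR eps2 * lap_pdf (dmax%:R / eps2) x'.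
Proof.
move=> e0 hx.
set b := dmax%:R / eps2.
have b0 : 0 <= b by rewrite divr_ge0 // ler0n.
case: (eqVneq b 0) => [->|bn0].
  by rewrite /lap_pdf !mulr0 invr0 !mulr0.
have bp : 0 < b by rewrite lt_def bn0.
have en0 : eps2 != 0.
  by apply: contra bn0 => /eqP e; rewrite /b e invr0 mulr0.
have dn0 : (dmax%:R : R) != 0.
  by apply: contra bn0 => /eqP e; rewrite /b e mul0r.
have db : dmax%:R / b = eps2 by rewrite /b invf_div mulrCA mulfV // mulr1.
have h : `|x'| <= `|x| + dmax%:R.
  have -> : x' = (x' - x) + x by ring.
  apply: le_trans (ler_normD _ _) _.
  by rewrite distrC [X in _ <= X]addrC lerD2r.
rewrite /lap_pdf mulrA -expRD ler_wpM2r //.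
  by rewrite invr_ge0 mulr_ge0 // ltW.
rewrite ler_expR -db -mulrDl ler_wpM2r //.
  by rewrite invr_ge0 ltW.
lra.
Qed.

Lemma round1_ge0 n (eps mu : R) (i : 'I_n) a r : 0 <= eps -> 0 <= mu -> mu <= 1 ->
  0 <= round1_pmf eps mu i a r.
Proof.
move=> e0 m0 m1; apply: prodr_ge0 => j _; case: ifP => _; first exact: arr_ge0.
by case: (r j).
Qed.

Lemma comb (r r' l l' E1 E2 : R) : 0 <= r -> 0 <= l -> r <= E1 * r' -> l <= E2 * l' ->
  r * l <= (E1 * E2) * (r' * l').
Proof.
move=> r0 l0 h1 h2; apply: le_trans (ler_pM r0 l0 h1 h2) _.
by rewrite mulrACA.
Qed.

Lemma key_row n (A A' : 'I_n -> 'I_n -> bool) :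
  simple_graph A -> simple_graph A' -> differ_one_edge A A' ->
  exists i0 : 'I_n, (forall i : 'I_n, i != i0 -> forall j : 'I_n, (j < i)%N -> A i j = A' i j)
    /\ differ_one_bit (A i0) (A' i0).
Proof.
move=> [symA _] [symA' _] [u [w [uw [ne hp]]]].
have hp' : forall x y, A x y != A' x y -> (x == u) && (y == w) || (x == w) && (y == u).
  exact: hp.
case: (ltnP u w) => huw.
- exists w; split.
  + move=> i ni j ji; apply/eqP; apply: contraT => hne.
    case/orP: (hp' _ _ hne) => /andP[/eqP ei /eqP ej]; subst i j.
    * by move: ji; rewrite ltnNge (ltnW huw).
    * by rewrite eqxx in ni.
  + exists u; split; first by rewrite symA symA'.
    move=> k nk; apply/eqP; apply: contraT => hne.
    case/orP: (hp' _ _ hne) => /andP[/eqP ei /eqP ej].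
    * by move: uw; rewrite ei eqxx.
    * by rewrite ej eqxx in nk.
- exists u; split.
  + move=> i ni j ji; apply/eqP; apply: contraT => hne.
    case/orP: (hp' _ _ hne) => /andP[/eqP ei /eqP ej]; subst i j.
    * by rewrite eqxx in ni.
    * by move: ji; rewrite ltnNge huw.
  + exists w; split => //.
    move=> k nk; apply/eqP; apply: contraT => hne.
    case/orP: (hp' _ _ hne) => /andP[/eqP ei /eqP ej].
    * by rewrite ej eqxx in nk.
    * by move: uw; rewrite ei eqxx.
Qed.

Lemma subBB (x y z : R) : (z - x) - (z - y) = y - x.
Proof. by ring. Qed.

End Aux.

Theorem theorem4p1 (R : realType) (v : variant) (n : nat)
  (eps1 eps2 mu : R) (dmax : nat) :
  0 <= eps1 -> 0 <= eps2 -> 0 <= mu -> mu <= expR eps1 / (expR eps1 + 1) ->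
  (forall (i : 'I_n) (Rother : 'I_n -> 'I_n -> bool),
     edge_LDP (deg_le dmax) (eps1 + eps2)
       (local_density v eps1 eps2 mu dmax i Rother)) /\
  relationship_DP
    (fun A : 'I_n -> 'I_n -> bool =>
       simple_graph A /\ forall i, deg_le dmax (A i))
    (eps1 + eps2) (@joint_density R v eps1 eps2 mu dmax n).
Proof.
move=> e1 e2 m0 mle.
have m1 : mu <= 1 by exact: mu_le1 e1 mle.
have b0 : 0 <= (dmax%:R / eps2 : R) by rewrite divr_ge0 // ler0n.
split.
- move=> i Rother a a' da da' hd s.
  rewrite /local_density expRD.
  set M := message v (upd_row Rother i s.1) i.
  apply: comb.
  + exact: round1_ge0.
  + exact: lap_ge0.
  + exact: round1_bound.
  + apply: lap_bound => //.
    rewrite subBB distrC.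
    exact: w_bound.
- move=> A A' [sA dA] [sA' dA'] hd s.
  have [i0 [H1 H2]] := @key_row n A A' sA sA' hd.
  rewrite /joint_density expRD.
  apply: comb.
  + by apply: prodr_ge0 => i _; apply: round1_ge0.
  + by apply: prodr_ge0 => i _; apply: lap_ge0.
  + apply: (@prod_le1 _ _ _ _ i0).
    * by move=> i; apply: round1_ge0.
    * by move=> i /H1 H; case: (@row_same R n eps1 mu v i (A i) (A' i) (s.1 i) (message v s.1 i) H).
    * exact: round1_bound.
  + apply: (@prod_le1 _ _ _ _ i0).
    * by move=> i; apply: lap_ge0.
    * by move=> i /H1 H; case: (@row_same R n eps1 mu v i (A i) (A' i) (s.1 i) (message v s.1 i) H) => _ ->.
    * apply: lap_bound => //.
      rewrite subBB distrC.
      exact: w_bound.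
Qed.
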